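(* In the setting of the context, assume further that $\theta^*_i\ne\theta^*_0$ for $1\le i\le d$. Then the graph $\Delta$ is connected.
   Context: Let $\mathbb F$ be a field, $d\ge1$ an integer, $V$ a vector space over $\mathbb F$ of dimension $d+1$, $\mathcal A=\mathrm{End}(V)$ with identity $I$. Let $E^*_0,\dots,E^*_d\in\mathcal A$ satisfy $E^*_iE^*_j=\delta_{i,j}E^*_i$ and $\mathrm{rank}(E^*_i)=1$ for $0\le i,j\le d$. Let $A\in\mathcal A$ satisfy $E^*_iAE^*_j=0$ if $|i-j|>1$ and $E^*_iAE^*_j\neq0$ if $|i-j|=1$. Assume $A$ is multiplicity-free, i.e. has $d+1$ mutually distinct eigenvalues $\theta_0,\dots,\theta_d$ in $\mathbb F$, and let $E_i=\prod_{j\ne i}\frac{A-\theta_jI}{\theta_i-\theta_j}$ be the primitive idempotent of $A$ for $\theta_i$. Let $\theta^*_0,\dots,\theta^*_d\in\mathbb F$ and $A^*=\sum_{i=0}^d\theta^*_iE^*_i$. Let $\Delta$ be the graph on vertex set $\{0,1,\dots,d\}$ in which $i,j$ are adjacent iff $i\ne j$ and $E_iA^*E_j\neq0$ (this relation is symmetric). *)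

(* Defs.v *)
(* V = F^(d+1), End(V) = 'M[F]_(d.+1); indices 0..d are 'I_(d.+1). *)
From HB Require Import structures.
From mathcomp Require Import all_boot all_order all_algebra.
Set Implicit Arguments. Unset Strict Implicit. Unset Printing Implicit Defensive.
Import GRing.Theory.
Local Open Scope ring_scope.

Definition prim_idem (F : fieldType) (d : nat) (A : 'M[F]_(d.+1))
  (theta : 'I_(d.+1) -> F) (i : 'I_(d.+1)) : 'M[F]_(d.+1) :=
  \prod_(j < d.+1 | j != i) ((theta i - theta j)^-1 *: (A - (theta j)%:M)).

Definition dual_mat (F : fieldType) (d : nat) (Estar : 'I_(d.+1) -> 'M[F]_(d.+1))
  (thetas : 'I_(d.+1) -> F) : 'M[F]_(d.+1) :=
  \sum_(i < d.+1) thetas i *: Estar i.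

Definition Delta_adj (F : fieldType) (d : nat) (A : 'M[F]_(d.+1))
  (theta : 'I_(d.+1) -> F) (Estar : 'I_(d.+1) -> 'M[F]_(d.+1))
  (thetas : 'I_(d.+1) -> F) : rel 'I_(d.+1) :=
  fun i j => (i != j) &&
    (prim_idem A theta i *m dual_mat Estar thetas *m prim_idem A theta j != 0).

Definition graph_connected (T : finType) (e : rel T) : Prop :=
  forall x y : T, connect e x y.

(* Main.v *)
Require Import Defs.
From HB Require Import structures.
From mathcomp Require Import all_boot all_order all_algebra.
From mathcomp Require Import zify.
Set Implicit Arguments. Unset Strict Implicit. Unset Printing Implicit Defensive.
Import GRing.Theory.
Local Open Scope ring_scope.

Lemma vprod (F : fieldType) (n m : nat) (v : 'M[F]_(m, n.+1)) (B : 'M[F]_n.+1)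
  (a : F) (I : Type) (r : seq I) (P : pred I) (f g : I -> F) :
  v *m B = a *: v ->
  v *m \prod_(j <- r | P j) (f j *: (B - (g j)%:M)) =
  (\prod_(j <- r | P j) (f j * (a - g j))) *: v.
Proof.
move=> hv; apply: (big_rec2 (fun X s => v *m X = s *: v)).
  by rewrite mulmx1 scale1r.
move=> j X s _ ih.
rewrite -mulmxE mulmxA -scalemxAr mulmxBr hv mul_mx_scalar -scalerBl.
by rewrite -scalemxAl -scalemxAl ih !scalerA.
Qed.

Lemma colcancel (F : fieldType) n m (c : 'cV[F]_n) (X : 'M[F]_(1, m)) :
  c != 0 -> c *m X = 0 -> X = 0.
Proof.
move=> hc hX; have [l hl]: exists l, c l 0 != 0.
  case: (pickP (fun l => c l 0 != 0)) => [l hl|h]; first by exists l.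
  move: hc; rewrite (_ : c = 0) ?eqxx //; apply/matrixP => i j.
  by rewrite ord1 mxE; apply/eqP; move: (h i) => /negbFE.
apply/matrixP => i j; rewrite ord1 [RHS]mxE.
have := congr1 (fun M : 'M_(n, m) => M l j) hX; rewrite !mxE big_ord1 => /eqP.
by rewrite mulf_eq0 (negbTE hl) /= => /eqP.
Qed.

Lemma rowcancel (F : fieldType) n m (r : 'rV[F]_n) (X : 'M[F]_(m, 1)) :
  r != 0 -> X *m r = 0 -> X = 0.
Proof.
move=> hr hX; apply: trmx_inj; rewrite trmx0.
apply: (@colcancel _ _ _ r^T); first by rewrite trmx_eq0.
by rewrite -trmx_mul hX trmx0.
Qed.

Lemma rank1_factor (F : fieldType) n (M : 'M[F]_n) :
  \rank M = 1%N -> exists c : 'cV_n, exists r : 'rV_n, M = c *m r.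
Proof.
move=> h; move: (col_base M) (row_base M) (mulmx_base M); rewrite h.
by move=> c r <-; exists c, r.
Qed.

Lemma span_lemma (F : fieldType) (d : nat) (A : 'M[F]_(d.+1))
  (c : 'I_(d.+1) -> 'cV[F]_(d.+1)) (r : 'I_(d.+1) -> 'rV[F]_(d.+1))
  (hrc : forall i j, (r i *m c j) 0 0 = (i == j)%:R)
  (hsum : \sum_i c i *m r i = 1%:M)
  (h0 : forall i j : 'I_(d.+1), (1 < `|(i : int) - (j : int)|)%N ->
      (r i *m A *m c j) 0 0 = 0)
  (h1 : forall i j : 'I_(d.+1), `|(i : int) - (j : int)|%N = 1%N ->
      (r i *m A *m c j) 0 0 != 0)
  m (X : 'M[F]_(d.+1, m)) :
  (forall k : 'I_(d.+1), r ord0 *m A ^+ k *m X = 0) -> X = 0.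
Proof.
move=> hX.
pose a k (j : 'I_(d.+1)) := (r ord0 *m A ^+ k *m c j) 0 0.
pose b (i j : 'I_(d.+1)) := (r i *m A *m c j) 0 0.
have rec : forall k j, a k.+1 j = \sum_i a k i * b i j.
  move=> k j; rewrite /a /b exprSr -mulmxE.
  have -> : r ord0 *m (A ^+ k *m A) *m c j =
    r ord0 *m A ^+ k *m (\sum_i c i *m r i) *m A *m c j.
    by rewrite hsum mulmx1 !mulmxA.
  rewrite mulmx_sumr !mulmx_suml summxE; apply: eq_bigr => i _.
  have -> : r ord0 *m A ^+ k *m (c i *m r i) *m A *m c j =
     (r ord0 *m A ^+ k *m c i) *m (r i *m A *m c j) by rewrite !mulmxA.
  by rewrite [LHS]mxE big_ord1.
have claim : forall k, (k < d.+1)%N ->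
   (forall j : 'I_(d.+1), (k < j)%N -> a k j = 0) /\
   (forall j : 'I_(d.+1), (j : nat) = k -> a k j != 0).
  elim=> [|k ih] hk.
    rewrite /a expr0 mulmx1; split => j hj; rewrite hrc.
      by rewrite (_ : (ord0 == j) = false) //; apply/negbTE; rewrite -val_eqE /= neq_ltn hj.
    by rewrite (_ : (ord0 == j) = true) ?oner_neq0 //; apply/eqP/val_inj.
  have hk' : (k < d.+1)%N by apply: ltnW.
  have [ih1 ih2] := ih hk'.
  split.
    move=> j hj; rewrite rec big1 // => i _.
    case: (ltnP k i) => hi; first by rewrite ih1 // mul0r.
    rewrite /b h0 ?mulr0 //; lia.
  move=> j hj; rewrite rec (bigD1 (Ordinal hk')) //= big1 ?addr0.
    apply: mulf_neq0; first exact: ih2.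
    by apply: h1 => /=; lia.
  move=> i hi; case: (ltnP k i) => hki; first by rewrite ih1 // mul0r.
  have hik : (i < k)%N.
    rewrite ltn_neqAle hki andbT; apply: contra hi => /eqP hh.
    by apply/eqP/val_inj.
  rewrite /b h0 ?mulr0 //; lia.
pose T := \matrix_(k < d.+1, j < d.+1) a k j.
pose Wr := \matrix_(k < d.+1, l < d.+1) (r ord0 *m A ^+ k) 0 l.
pose Cm := \matrix_(l < d.+1, j < d.+1) c j l 0.
have hT : T = Wr *m Cm.
  apply/matrixP => k j; rewrite !mxE /a mxE; apply: eq_bigr => l _; by rewrite !mxE.
have detT : \det T != 0.
  rewrite det_trig; last first.
    by apply/is_trig_mxP => i j hij; rewrite mxE; have [] := claim i (ltn_ord i); move=> ->.
  rewrite prodf_seq_neq0; apply/allP => i _; apply/implyP => _; rewrite mxE.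
  by have [_ ->] := claim i (ltn_ord i).
have hWr : Wr \in unitmx.
  rewrite unitmxE unitfE; move: detT; rewrite hT det_mulmx mulf_eq0 negb_or.
  by case/andP.
have hWX : Wr *m X = 0.
  apply/row_matrixP => k; rewrite row_mul row0.
  have -> : row k Wr = r ord0 *m A ^+ k by apply/rowP => l; rewrite !mxE.
  exact: hX.
by rewrite -(mulKmx hWr X) hWX mulmx0.
Qed.

Lemma trX (F : fieldType) n (A : 'M[F]_n.+1) k : (A^T) ^+ k = (A ^+ k)^T.
Proof.
elim: k => [|k ih]; first by rewrite !expr0 trmx1.
by rewrite exprSr exprS ih -!mulmxE -trmx_mul.
Qed.

Lemma prim_vec (F : fieldType) d (A : 'M[F]_(d.+1)) (theta : 'I_(d.+1) -> F)
  (htheta_inj : injective theta) (v : 'rV[F]_(d.+1)) k i :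
  v *m A = theta k *: v ->
  v *m prim_idem A theta i = (if k == i then 1 else 0) *: v.
Proof.
move=> hv; rewrite /prim_idem (vprod _ _ _ _ hv).
case: (eqVneq k i) => [->|hki].
  rewrite big1 // => j hj; rewrite mulVf // subr_eq0.
  by apply/eqP => /htheta_inj h; rewrite h eqxx in hj.
by rewrite (bigD1 k) //= subrr mulr0 mul0r scale0r.
Qed.

Theorem proposition4p9 (F : fieldType) (d : nat) (hd : (1 <= d)%N)
  (Estar : 'I_(d.+1) -> 'M[F]_(d.+1))
  (hEidem : forall i j : 'I_(d.+1),
     Estar i *m Estar j = if i == j then Estar i else 0)
  (hErank : forall i : 'I_(d.+1), \rank (Estar i) = 1%N)
  (A : 'M[F]_(d.+1))
  (hA0 : forall i j : 'I_(d.+1), (1 < `|(i : int) - (j : int)|)%N ->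
     Estar i *m A *m Estar j = 0)
  (hA1 : forall i j : 'I_(d.+1), `|(i : int) - (j : int)|%N = 1%N ->
     Estar i *m A *m Estar j != 0)
  (theta : 'I_(d.+1) -> F) (htheta_inj : injective theta)
  (htheta_eig : forall i : 'I_(d.+1), eigenvalue A (theta i))
  (thetas : 'I_(d.+1) -> F)
  (hthetas : forall i : 'I_(d.+1), (1 <= i)%N -> thetas i != thetas ord0) :
  graph_connected (Delta_adj A theta Estar thetas).
Proof.
have [v hv] : exists v : 'I_(d.+1) -> 'rV[F]_(d.+1),
    forall k, v k *m A = theta k *: v k /\ v k != 0.
  apply: (@fin_all_exists _ (fun _ => 'rV[F]_(d.+1))
    (fun k w => w *m A = theta k *: w /\ w != 0)) => k; case/eigenvalueP: (htheta_eig k) => w h1 h2.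
  by exists w.
pose E i := prim_idem A theta i.
have hvE : forall k i, v k *m E i = (if k == i then 1 else 0) *: v k.
  by move=> k i; apply: prim_vec => //; exact: (hv k).1.
have vcancel : forall X Y : 'M[F]_(d.+1), (forall k, v k *m X = v k *m Y) -> X = Y.
  move=> X Y hXY.
  pose W := \matrix_(k < d.+1, l < d.+1) v k 0 l.
  have rowW : forall k, row k W = v k by move=> k; apply/rowP => l; rewrite !mxE.
  have hW : W \in unitmx.
    rewrite unitmxE unitfE; apply/negP => /det0P [u hu0 huW].
    move/negP: hu0; apply; apply/eqP/rowP => i; rewrite [RHS]mxE.
    have := congr1 (fun M : 'M_(1, d.+1) => M *m E i) huW.
    rewrite mul0mx (mulmx_sum_row u W) mulmx_suml (bigD1 i) //= big1 ?addr0.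
      rewrite -scalemxAl rowW hvE eqxx scale1r => /eqP.
      by rewrite scaler_eq0 (negbTE (hv i).2) orbF => /eqP.
    by move=> k hk; rewrite -scalemxAl rowW hvE (negbTE hk) scale0r scaler0.
  have h : W *m X = W *m Y by apply/row_matrixP => k; rewrite !row_mul rowW hXY.
  by rewrite -(mulKmx hW X) h mulKmx.
have hEE : forall i j, E i *m E j = if i == j then E i else 0.
  move=> i j; apply: vcancel => k; rewrite mulmxA hvE -scalemxAl hvE.
  case: (eqVneq i j) => [<-|hij].
    by rewrite hvE; case: (k == i); rewrite ?scale1r ?scale0r ?scaler0.
  rewrite mulmx0; case: (eqVneq k i) => [->|hki]; last by rewrite scale0r.
  by rewrite (negbTE hij) scale0r scaler0.
have hEsum : \sum_i E i = 1%:M.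
  apply: vcancel => k; rewrite mulmx_sumr mulmx1 (bigD1 k) //= big1 ?addr0.
    by rewrite hvE eqxx scale1r.
  by move=> i hi; rewrite hvE eq_sym (negbTE hi) scale0r.
have hEA : forall i, E i *m A = A *m E i.
  move=> i; apply: vcancel => k; rewrite !mulmxA hvE (hv k).1 -!scalemxAl.
  by rewrite (hv k).1 hvE !scalerA mulrC.
have hEnz : forall i, E i != 0.
  move=> i; apply/eqP => h; have := hvE i i; rewrite h mulmx0 eqxx scale1r.
  by move/esym/eqP; rewrite (negbTE (hv i).2).
have [cr hcr] : exists cr : 'I_(d.+1) -> 'cV[F]_(d.+1) * 'rV[F]_(d.+1),
    forall i, Estar i = (cr i).1 *m (cr i).2.
  apply: (@fin_all_exists _ (fun _ => ('cV[F]_(d.+1) * 'rV[F]_(d.+1))%type)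
    (fun i cr => Estar i = cr.1 *m cr.2)) => i; have [c [r h]] := rank1_factor (hErank i).
  by exists (c, r).
pose c i := (cr i).1; pose r i := (cr i).2.
have hcr' : forall i, Estar i = c i *m r i := hcr.
have hEsnz : forall i, Estar i != 0.
  by move=> i; apply/eqP => h; have := hErank i; rewrite h mxrank0.
have hc0 : forall i, c i != 0.
  by move=> i; apply: contra (hEsnz i) => /eqP hh; rewrite hcr' hh mul0mx.
have hr0 : forall i, r i != 0.
  by move=> i; apply: contra (hEsnz i) => /eqP hh; rewrite hcr' hh mulmx0.
have hrc : forall i j, (r i *m c j) 0 0 = (i == j)%:R.
  move=> i j; have := hEidem i j; rewrite !hcr'.
  case: (eqVneq i j) => [<-|hij] h; rewrite !mulmxA in h.
    have : c i *m ((r i *m c i - 1%:M) *m r i) = 0.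
      by rewrite mulmxBl mulmxBr mul1mx !mulmxA h subrr.
    move/(colcancel (hc0 i))/(rowcancel (hr0 i)) => /eqP.
    by rewrite subr_eq0 => /eqP ->; rewrite !mxE !eqxx.
  have : c i *m ((r i *m c j) *m r j) = 0 by rewrite !mulmxA h.
  move/(colcancel (hc0 i))/(rowcancel (hr0 j)) => ->.
  by rewrite mxE.
have hsum : \sum_i c i *m r i = 1%:M.
  pose R := \matrix_(i < d.+1, l < d.+1) r i 0 l.
  pose Cm := \matrix_(l < d.+1, j < d.+1) c j l 0.
  have hRC : R *m Cm = 1%:M.
    apply/matrixP => i j; rewrite [RHS]mxE -hrc !mxE.
    by apply: eq_bigr => l _; rewrite !mxE.
  have <- := mulmx1C hRC.
  apply/matrixP => a b; rewrite summxE !mxE; apply: eq_bigr => i _.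
  by rewrite !mxE big_ord1.
have hfac : forall i j, Estar i *m A *m Estar j = c i *m ((r i *m A *m c j) *m r j).
  by move=> i j; rewrite !hcr' !mulmxA.
have hrAc0 : forall i j : 'I_(d.+1), (1 < `|(i : int) - (j : int)|)%N ->
      (r i *m A *m c j) 0 0 = 0.
  move=> i j h; have := hA0 _ _ h; rewrite hfac.
  by move/(colcancel (hc0 i))/(rowcancel (hr0 j)) => ->; rewrite mxE.
have hrAc1 : forall i j : 'I_(d.+1), `|(i : int) - (j : int)|%N = 1%N ->
      (r i *m A *m c j) 0 0 != 0.
  move=> i j h; apply: contra (hA1 _ _ h) => /eqP hh.
  by rewrite hfac (mx11_scalar (r i *m A *m c j)) hh mul_scalar_mx scale0r mulmx0.

have hEssum : \sum_k Estar k = 1%:M.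
  by rewrite -hsum; apply: eq_bigr => k _; exact: hcr'.
pose As := dual_mat Estar thetas.
have hEsAs : forall k, Estar k *m As = thetas k *: Estar k.
  move=> k; rewrite /As /dual_mat mulmx_sumr (bigD1 k) //= big1 ?addr0.
    by rewrite -scalemxAr hEidem eqxx.
  by move=> i hi; rewrite -scalemxAr hEidem eq_sym (negbTE hi) scaler0.
pose M := \prod_(i | i != ord0) (1 *: (As - (thetas i)%:M)).
have hEsM : forall k, Estar k *m M =
    (\prod_(i | i != ord0) (1 * (thetas k - thetas i))) *: Estar k.
  by move=> k; apply: vprod; exact: hEsAs.
pose kappa := \prod_(i | i != ord0) (1 * (thetas ord0 - thetas i)).
have hkappa : kappa != 0.
  rewrite prodf_seq_neq0; apply/allP => i _; apply/implyP => hi.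
  rewrite mul1r subr_eq0 eq_sym; apply: hthetas.
  by rewrite lt0n; move: hi; rewrite -val_eqE.
have hM : M = kappa *: Estar ord0.
  rewrite -[M]mul1mx -hEssum mulmx_suml (bigD1 ord0) //= big1 ?addr0.
    by rewrite hEsM.
  by move=> k hk; rewrite hEsM (bigD1 k) //= subrr mulr0 mul0r scale0r.
move=> x y; apply: contraT => hxy.
pose S := [set z | connect (Delta_adj A theta Estar thetas) x z].
have hxS : x \in S by rewrite inE connect0.
have hyS : y \notin S by rewrite inE.
have hnoedge : forall i j, i \in S -> j \notin S -> E i *m As *m E j = 0.
  move=> i j hi hj.
  have hne : ~~ Delta_adj A theta Estar thetas i j.
    apply: contra hj => hij; rewrite inE in hi *.
    rewrite /S inE; exact: (@connect_trans _ _ i x j hi (connect1 hij)).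
  move: hne; rewrite /Delta_adj negb_and !negbK => /orP [/eqP hij|/eqP h]; last exact: h.
  by move: hi; rewrite hij (negbTE hj).
pose P := \sum_(i in S) E i.
pose Q := \sum_(i | i \notin S) E i.
have hPQ : P + Q = 1%:M by rewrite -hEsum [RHS](bigID (fun i => i \in S)).
have hPAQ : P *m As *m Q = 0.
  rewrite /P !mulmx_suml big1 // => i0 hi0.
  rewrite /Q mulmx_sumr big1 // => j0 hj0; exact: hnoedge.
have hPAs : P *m As *m P = P *m As.
  have : P *m As *m (P + Q) = P *m As by rewrite hPQ mulmx1.
  by rewrite mulmxDr hPAQ addr0.
have hPP : P *m P = P.
  rewrite /P mulmx_suml; apply: eq_bigr => i hi; rewrite mulmx_sumr (bigD1 i hi) /=.
  rewrite hEE eqxx big1 ?addr0 // => j /andP [_ hji].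
  by rewrite hEE eq_sym (negbTE hji).
have hPA : GRing.comm P A.
  rewrite /GRing.comm -!mulmxE /P mulmx_suml mulmx_sumr.
  by apply: eq_bigr => i _; exact: hEA.
have hPAk : forall k, P *m A ^+ k = A ^+ k *m P.
  by move=> k; exact: (commrX k hPA).
have hPEx : P *m E x = E x.
  rewrite /P mulmx_suml (bigD1 x hxS) /= hEE eqxx big1 ?addr0 // => j /andP [_ hj].
  by rewrite hEE (negbTE hj).
have hPEy : P *m E y = 0.
  rewrite /P mulmx_suml big1 // => j hj; rewrite hEE.
  case: (eqVneq j y) => // hjy; by move: hj; rewrite hjy (negbTE hyS).
have hPM : P *m M = P *m M *m P.
  apply: (big_ind (fun X => P *m X = P *m X *m P)).
  - by rewrite mulmx1 hPP.
  - move=> X Y hX hY; rewrite -!mulmxE.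
    have e1 : P *m (X *m Y) = P *m X *m (P *m Y).
      by rewrite mulmxA {1}hX -mulmxA.
    by rewrite e1 -(mulmxA (P *m X) (P *m Y) P) -hY.
  - move=> i _; rewrite scale1r mulmxBr mul_mx_scalar mulmxBl -scalemxAl hPP.
    by rewrite hPAs.
have hPE0 : P *m Estar ord0 = P *m Estar ord0 *m P.
  move: hPM; rewrite hM -scalemxAr -scalemxAl.
  by move/(scalerI hkappa).
rewrite hcr' !mulmxA in hPE0.
case: (eqVneq (P *m c ord0) 0) => hPc.
  have hP0 : P = 0.
    apply: trmx_inj; rewrite trmx0.
    apply: (@span_lemma _ _ A^T (fun i => (r i)^T) (fun i => (c i)^T)).
    - by move=> i j; rewrite -trmx_mul mxE hrc eq_sym.
    - rewrite -trmx1 -hsum raddf_sum; apply: eq_bigr => i _.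
      by rewrite -trmx_mul.
    - move=> i j h; rewrite -!trmx_mul mxE mulmxA hrAc0 //; lia.
    - move=> i j h; rewrite -!trmx_mul mxE mulmxA hrAc1 //; lia.
    - move=> k; rewrite trX -!trmx_mul mulmxA hPAk -mulmxA hPc mulmx0 trmx0 //.
  by move: (hEnz x); rewrite -hPEx hP0 mul0mx eqxx.
have hr : r ord0 = r ord0 *m P.
  apply/eqP; rewrite eq_sym -subr_eq0; apply/eqP; apply: (colcancel hPc).
  by rewrite mulmxBr !mulmxA -hPE0 subrr.
have hP1 : 1%:M - P = 0.
  apply: (span_lemma hrc hsum hrAc0 hrAc1) => k.
  rewrite mulmxBr mulmx1 {1}hr -(mulmxA (r ord0) P) hPAk mulmxA subrr //.
move/eqP: hP1; rewrite subr_eq0 => /eqP hP1.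
by move: (hEnz y); rewrite -hPEy -hP1 mul1mx eqxx.
Qed.
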